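(* There exists $\theta_0\in(0,\pi/4)$, depending only on $\alpha$, such that for every $\theta\in(0,\theta_0)$ there exists $a_0(\theta)\ge1$ such that for every $a>a_0(\theta)$ and every $b\in(0,1)$ we have $\mathcal R(t,b,\theta)\subset B(p,r_p)$ for all $p\in\mathcal P(a,b,\theta)$ and all $t\in[1,x_p]$.
   Context: $\mathbb H=\mathbb R^3$, $p=(x_p,y_p,z_p)$, group law $(x,y,z)\cdot(x',y',z')=(x+x',y+y',z+z'+\tfrac12(xy'-yx'))$, dilations $\delta_\lambda(x,y,z)=(\lambda x,\lambda y,\lambda^2z)$. Fix $\alpha>0$ such that $d_\alpha(p,q)=\inf\{r>0:\delta_{1/r}(p^{-1}\cdot q)\in B_\alpha\}$ is a distance, $B_\alpha$ the closed Euclidean ball of radius $\alpha$ at $0$. $B(p,r)=\{q:d_\alpha(q,p)\le r\}$, $r_p=d_\alpha(0,p)$. $\mathcal P(a,b,\theta)=\{p: x_p>a,\ |z_p|<b,\ |y_p|<x_p\tan\theta\}$ and $\mathcal R(t,b,\theta)=\{p: x_p=t,\ |z_p|<b,\ |y_p|<x_p\tan\theta\}$. *)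

(* Defs.v *)
From Stdlib Require Import Reals Lra ClassicalEpsilon.
Open Scope R_scope.

Definition pt := (R * R * R)%type.
Definition xc (p : pt) : R := fst (fst p).
Definition yc (p : pt) : R := snd (fst p).
Definition zc (p : pt) : R := snd p.

Definition hmul (p q : pt) : pt :=
  (xc p + xc q, yc p + yc q,
   zc p + zc q + / 2 * (xc p * yc q - yc p * xc q)).
Definition hinv (p : pt) : pt := (- xc p, - yc p, - zc p).
Definition dil (l : R) (p : pt) : pt := (l * xc p, l * yc p, l * l * zc p).
Definition origin : pt := (0, 0, 0).

Definition in_Balpha (alpha : R) (p : pt) : Prop :=
  xc p ^ 2 + yc p ^ 2 + zc p ^ 2 <= alpha ^ 2.

Definition is_glb (E : R -> Prop) (m : R) : Prop :=
  (forall x, E x -> m <= x) /\ (forall m', (forall x, E x -> m' <= x) -> m' <= m).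

(* infimum (chosen by classical choice; well defined whenever it exists) *)
Definition Rinf (E : R -> Prop) : R :=
  epsilon (inhabits 0) (fun m => is_glb E m).

Definition dalpha (alpha : R) (p q : pt) : R :=
  Rinf (fun r => 0 < r /\ in_Balpha alpha (dil (/ r) (hmul (hinv p) q))).

Definition is_distance (d : pt -> pt -> R) : Prop :=
  (forall p q, 0 <= d p q) /\
  (forall p q, d p q = 0 <-> p = q) /\
  (forall p q, d p q = d q p) /\
  (forall p q s, d p s <= d p q + d q s).

Definition ballB (alpha : R) (p : pt) (r : R) (q : pt) : Prop :=
  dalpha alpha q p <= r.

Definition rp (alpha : R) (p : pt) : R := dalpha alpha origin p.

Definition inP (a b th : R) (p : pt) : Prop :=
  xc p > a /\ Rabs (zc p) < b /\ Rabs (yc p) < xc p * tan th.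

Definition inRset (t b th : R) (p : pt) : Prop :=
  xc p = t /\ Rabs (zc p) < b /\ Rabs (yc p) < xc p * tan th.

(* Main.v *)
Require Import Defs.
From Stdlib Require Import Reals Lra Psatz ClassicalEpsilon.
Open Scope R_scope.
Lemma core (alpha T X t yp yq zp zq u : R) :
  0 < alpha -> 0 < T -> 3*T < 1 -> 2*alpha*T < 1 -> X > 1 -> X > 10*alpha ->
  1 <= t <= X -> Rabs yp < X*T -> Rabs yq < t*T -> Rabs zp < 1 -> Rabs zq < 1 ->
  (u*X)^2 + (u*yp)^2 + (u*u*zp)^2 <= alpha^2 ->
  (u*(-t+X))^2 + (u*(-yq+yp))^2 + (u*u*(-zq+zp+/2*(-t*yp - -yq*X)))^2 <= alpha^2.
Proof.
  intros Ha HT H3 H2a HX1 HXa Ht Hyp Hyq Hzp Hzq Hu.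
  apply Rabs_def2 in Hyp, Hyq, Hzp, Hzq.
  destruct Hyp as [yp1 yp2]; destruct Hyq as [yq1 yq2];
  destruct Hzp as [zp1 zp2]; destruct Hzq as [zq1 zq2].
  set (s := t*X).
  assert (Hs1 : 1 <= s) by (unfold s; nra).
  assert (Hyq2 : yq^2 <= t*t*T*T) by nra.
  assert (Hyy : - 2*yp*yq <= 2*X*T*t*T) by nra.
  assert (HTT : T*T < 1/9) by nra.
  assert (Ht2 : t*t <= s) by (unfold s; nra).
  assert (HA : (-t+X)^2 + (-yq+yp)^2 - X^2 - yp^2 <= -(2/3)*s).
  { assert (t*t*T*T <= s*(1/9)) by nra.
    assert (2*X*T*t*T <= s*(2/9)).
    { replace (2*X*T*t*T) with (2*s*(T*T)) by (unfold s; ring). nra. }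
    replace ((-t+X)^2 + (-yq+yp)^2 - X^2 - yp^2) with (t*t - 2*s + yq^2 + (- 2*yp*yq)) by (unfold s; ring).
    lra. }
  assert (HyqX1 : yq*X <= s*T) by (unfold s; nra).
  assert (HyqX2 : -(s*T) <= yq*X) by (unfold s; nra).
  assert (Htyp1 : t*yp <= s*T) by (unfold s; nra).
  assert (Htyp2 : -(s*T) <= t*yp) by (unfold s; nra).
  set (D := -zq + /2*(-t*yp - -yq*X)).
  assert (HD1 : D <= 1 + s*T) by (unfold D; lra).
  assert (HD2 : -(1 + s*T) <= D) by (unfold D; lra).
  set (K := (1+s*T)*(3+s*T)).
  assert (HZ : (zp + D)^2 - zp^2 <= K).
  { unfold K. assert (0 <= s*T) by nra. nra. }
  assert (HK0 : 0 <= K) by (unfold K; nra).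
  assert (HaK : alpha^2 * K <= (2/3)*s*X^2).
  { unfold K.
    assert (HaT : alpha*T < 1/2) by lra.
    assert (E1 : alpha^2*(s*T)*(s*T) <= s*X^2/4).
    { assert (0 < alpha*T) by (apply Rmult_lt_0_compat; lra).
      assert (alpha*T*(alpha*T) <= 1/4) by nra.
      assert (s <= X^2) by (unfold s; nra).
      replace (alpha^2*(s*T)*(s*T)) with ((s*s)*(alpha*T*(alpha*T))) by ring.
      assert (0 <= s*s) by nra.
      assert (s*s*(alpha*T*(alpha*T)) <= s*s/4) by nra.
      nra. }
    assert (E2 : alpha^2*(4*s*T) <= 2*alpha*s).
    { replace (alpha^2*(4*s*T)) with ((4*alpha*s)*(alpha*T)) by ring.
      assert (0 <= 4*alpha*s) by nra. nra. }
    assert (E3 : 3*alpha^2 <= 0.03*X^2) by nra.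
    assert (E4 : 2*alpha <= 0.2*X^2) by nra.
    nra. }
  assert (Hu2 : (u*X)^2 <= alpha^2).
  { assert (0 <= (u*yp)^2) by nra. assert (0 <= (u*u*zp)^2) by nra. lra. }
  assert (HuK : u^2*K <= (2/3)*s).
  { assert (HX2 : 0 < X^2) by nra.
    assert (u^2*K*X^2 <= (2/3)*s*X^2).
    { replace (u^2*K*X^2) with ((u*X)^2*K) by ring. nra. }
    nra. }
  replace (-zq + zp + / 2 * (- t * yp - - yq * X)) with (zp + D) by (unfold D; ring).
  assert (Hu0 : 0 <= u^2) by nra.
  assert (u^2*((-t+X)^2 + (-yq+yp)^2 - X^2 - yp^2) <= u^2*(-(2/3)*s)) by nra.
  assert (u^2*u^2*((zp + D)^2 - zp^2) <= u^2*u^2*K).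
  { apply Rmult_le_compat_l; [nra | exact HZ]. }
  assert (u^2*u^2*K <= u^2*((2/3)*s)).
  { replace (u^2*u^2*K) with (u^2*(u^2*K)) by ring. apply Rmult_le_compat_l; lra. }
  replace ((u*(-t+X))^2 + (u*(-yq+yp))^2 + (u*u*(zp + D))^2) with
    (((u*X)^2 + (u*yp)^2 + (u*u*zp)^2) + u^2*((-t+X)^2 + (-yq+yp)^2 - X^2 - yp^2)
      + u^2*u^2*((zp + D)^2 - zp^2)) by ring.
  lra.
Qed.

Lemma glb_ex (E : R -> Prop) : (exists x, E x) -> (forall x, E x -> 0 <= x) ->
  exists m, is_glb E m.
Proof.
  intros [x0 Hx0] Hpos.
  destruct (completeness (fun x => E (-x))) as [m [Hub Hl]].
  - exists 0. intros x Hx. specialize (Hpos _ Hx). lra.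
  - exists (-x0). rewrite Ropp_involutive. exact Hx0.
  - exists (-m). split.
    + intros x Hx. assert (-x <= m). { apply Hub. rewrite Ropp_involutive. exact Hx. } lra.
    + intros m' Hm'. assert (m <= -m'). { apply Hl. intros y Hy. specialize (Hm' _ Hy). lra. } lra.
Qed.

Lemma Rinf_spec (E : R -> Prop) : (exists m, is_glb E m) -> is_glb E (Rinf E).
Proof. intros H. unfold Rinf. apply epsilon_spec. exact H. Qed.

Lemma Rinf_mono (E1 E2 : R -> Prop) : (forall r, E1 r -> E2 r) -> (exists r, E1 r) ->
  (forall r, E2 r -> 0 <= r) -> Rinf E2 <= Rinf E1.
Proof.
  intros Hin [r Hr] Hpos.
  assert (H1 : is_glb E1 (Rinf E1)).
  { apply Rinf_spec, glb_ex. exists r; exact Hr. intros x Hx. apply Hpos, Hin, Hx. }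
  assert (H2 : is_glb E2 (Rinf E2)).
  { apply Rinf_spec, glb_ex. exists r; apply Hin, Hr. exact Hpos. }
  destruct H1 as [_ H1]. apply H1. intros x Hx. destruct H2 as [H2 _]. apply H2, Hin, Hx.
Qed.

Lemma ball_nonempty (alpha A B C : R) : 0 < alpha ->
  exists r, 0 < r /\ (/r*A)^2 + (/r*B)^2 + (/r*/r*C)^2 <= alpha^2.
Proof.
  intros Ha.
  set (S := A^2 + B^2 + C^2).
  assert (HS : 0 <= S) by (unfold S; nra).
  assert (Ha2 : 0 < alpha^2) by nra.
  set (r := 1 + S/alpha^2).
  assert (HSa : 0 <= S/alpha^2) by (unfold Rdiv; apply Rmult_le_pos; [lra| left; apply Rinv_0_lt_compat; lra]).
  assert (Hr : 1 <= r) by (unfold r; lra).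
  exists r. split; [lra|].
  set (u := /r).
  assert (Hu0 : 0 < u) by (unfold u; apply Rinv_0_lt_compat; lra).
  assert (Hu1 : u <= 1).
  { unfold u. rewrite <- Rinv_1. apply Rinv_le_contravar; lra. }
  assert (HuS : u*S <= alpha^2).
  { assert (Hur : u*r = 1) by (unfold u; field; lra).
    unfold r in Hur.
    assert (u*(S/alpha^2) <= 1) by nra.
    replace (u*S) with (u*(S/alpha^2)*alpha^2) by (field; lra). nra. }
  assert (HC : (u*u*C)^2 <= (u*C)^2).
  { replace ((u*u*C)^2) with (u^2*(u*C)^2) by ring.
    assert (0 <= (u*C)^2) by nra. assert (u^2 <= 1) by nra. nra. }
  assert (u^2*S <= u*S).
  { assert (0 <= (1-u)*(u*S)) by (apply Rmult_le_pos; [lra| apply Rmult_le_pos; lra]).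
    replace (u^2*S) with (u*S - (1-u)*(u*S)) by ring. lra. }
  assert ((u*A)^2 + (u*B)^2 + (u*u*C)^2 <= u^2 * S).
  { replace (u^2*S) with ((u*A)^2 + (u*B)^2 + (u*C)^2) by (unfold S; ring). lra. }
  lra.
Qed.

Theorem lemma4p3 (alpha : R) (Halpha : 0 < alpha)
  (Hdist : is_distance (dalpha alpha)) :
  exists th0 : R, 0 < th0 < PI / 4 /\
    forall th : R, 0 < th < th0 ->
      exists a0 : R, 1 <= a0 /\
        forall a b : R, a > a0 -> 0 < b < 1 ->
          forall p : pt, inP a b th p ->
            forall t : R, 1 <= t <= xc p ->
              forall q : pt, inRset t b th q -> ballB alpha p (rp alpha p) q.
Proof.
  set (c := / (4 * (1 + alpha))).
  assert (Hc0 : 0 < c) by (unfold c; apply Rinv_0_lt_compat; lra).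
  assert (Hc4 : c * (4 * (1 + alpha)) = 1) by (unfold c; field; lra).
  assert (Hc1 : c < 1) by nra.
  exists (atan c). split.
  { split.
    - rewrite <- atan_0. apply atan_increasing. exact Hc0.
    - rewrite <- atan_1. apply atan_increasing. exact Hc1. }
  intros th [Hth1 Hth2].
  pose proof PI_RGT_0 as HPI.
  pose proof (atan_bound c) as [_ Hab].
  assert (HT : tan th < c).
  { rewrite <- (tan_atan c). apply tan_increasing; lra. }
  assert (HT0 : 0 < tan th) by (apply tan_gt_0; lra).
  exists (1 + 10*alpha). split; [lra|].
  intros a b Ha Hb p Hp t Ht q Hq.
  destruct p as [[X yp] zp]. destruct q as [[t' yq] zq].
  unfold inP, inRset, xc, yc, zc in *; simpl in *.
  destruct Hp as [HX [Hzp Hyp]]. destruct Hq as [Ht' [Hzq Hyq]]. subst t'.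
  unfold ballB, rp, dalpha.
  apply Rinf_mono.
  - intros r [Hr HB]. split; [exact Hr|].
    unfold in_Balpha, dil, hmul, hinv, origin, xc, yc, zc in *; simpl in *.
    apply (core alpha (tan th) X t yp yq zp zq (/r)); try lra.
    all: try nra.
    all: try (apply Rlt_trans with b; lra).
  - unfold in_Balpha, dil, hmul, hinv, origin, xc, yc, zc; simpl.
    destruct (ball_nonempty alpha (-0 + X) (-0+yp) (-0 + zp + / 2 * (- 0 * yp - - 0 * X)) Halpha)
      as [r [Hr HB]].
    exists r. split; [exact Hr| exact HB].
  - intros r [Hr _]. lra.
Qed.
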